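(* Let $x$ be a point of a topological space $X$. Then: (i) $X$ has a countable $cn$-network at $x$ if and only if there exist $\mathbf{M}_x\subseteq\mathbb{N}^\mathbb{N}$ and an $\mathbf{M}_x$-decreasing base $\mathcal{U}(x)=\{U_\alpha:\alpha\in\mathbf{M}_x\}$ of neighborhoods at $x$ satisfying the condition $(\mathbf{D})$; in that case the family $\mathcal{D}_{\mathcal{U}(x)}$ is a countable $cn$-network at $x$. (ii) $X$ has a countable $ck$-network at $x$ if and only if there exist $\mathbf{M}_x\subseteq\mathbb{N}^\mathbb{N}$ and an $\mathbf{M}_x$-decreasing base $\mathcal{U}(x)=\{U_\alpha:\alpha\in\mathbf{M}_x\}$ at $x$ satisfying $(\mathbf{D})$ such that $\mathcal{D}_{\mathcal{U}(x)}$ is a countable $ck$-network at $x$. (iii) $X$ has a countable $cp$-network at $x$ if and only if there exist $\mathbf{M}_x\subseteq\mathbb{N}^\mathbb{N}$ and an $\mathbf{M}_x$-decreasing base $\mathcal{U}(x)=\{U_\alpha:\alpha\in\mathbf{M}_x\}$ at $x$ satisfying $(\mathbf{D})$ such that $\mathcal{D}_{\mathcal{U}(x)}$ is a countable $cp$-network at $x$.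
   Context: $\mathbb{N}^\mathbb{N}$ carries the partial order $\alpha\le\beta$ iff $\alpha_i\le\beta_i$ for all $i$. For a subset $I$ of a partially ordered set, a family $\{A_i\}_{i\in I}$ of sets is $I$-decreasing if $A_j\subseteq A_i$ whenever $i\le j$ in $I$. For $\alpha\in\mathbb{N}^\mathbb{N}$ and $k\in\mathbb{N}$ let $I_k(\alpha)=\{\beta\in\mathbb{N}^\mathbb{N}:\beta_i=\alpha_i \text{ for } i=1,\dots,k\}$. For $\mathbf{M}\subseteq\mathbb{N}^\mathbb{N}$ and an $\mathbf{M}$-decreasing family $\mathcal{U}=\{U_\alpha:\alpha\in\mathbf{M}\}$ of subsets of a set, define $D_k(\alpha)=\bigcap_{\beta\in I_k(\alpha)\cap\mathbf{M}}U_\beta$ and $\mathcal{D}_\mathcal{U}=\{D_k(\alpha):\alpha\in\mathbf{M},k\in\mathbb{N}\}$ (a countable family). $\mathcal{U}$ satisfies condition $(\mathbf{D})$ if $U_\alpha=\bigcup_{k\in\mathbb{N}}D_k(\alpha)$ for every $\alpha\in\mathbf{M}$. For $x\in X$, a family $\mathcal{N}$ of subsets of $X$ is: a $cn$-network at $x$ if for each neighborhood $O_x$ of $x$ the set $\bigcup\{N\in\mathcal{N}:x\in N\subseteq O_x\}$ is a neighborhood of $x$; a $ck$-network at $x$ if for every neighborhood $O_x$ there is a neighborhood $U_x$ of $x$ such that for each compact $K\subseteq U_x$ there is a finite $\mathcal{F}\subseteq\mathcal{N}$ with $x\in\bigcap\mathcal{F}$ and $K\subseteq\bigcup\mathcal{F}\subseteq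 O_x$; a $cp$-network at $x$ if for every neighborhood $O_x$ there is $N\in\mathcal{N}$ with $x\in N\subseteq O_x$, and for every $A\subseteq X$ with $x\in\overline{A}\setminus A$ and every neighborhood $O_x$ there is $N\in\mathcal{N}$ with $x\in N\subseteq O_x$ and $N\cap A$ infinite. *)

(* Defs.v *)
From Stdlib Require Import List.
Set Implicit Arguments.

Definition set (X : Type) := X -> Prop.
Definition subset {X : Type} (A B : set X) : Prop := forall y, A y -> B y.

Record topology (X : Type) : Type := Topology {
  is_open : set X -> Prop;
  open_full : is_open (fun _ => True);
  open_inter : forall A B, is_open A -> is_open B -> is_open (fun y => A y /\ B y);
  open_union : forall F : set X -> Prop, (forall A, F A -> is_open A) ->
                 is_open (fun y => exists A, F A /\ A y)
}.

Section Topo.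
Context {X : Type} (T : topology X).

Definition nbhd (x : X) (N : set X) : Prop :=
  exists U, is_open T U /\ U x /\ subset U N.

Definition closure (A : set X) : set X :=
  fun x => forall N, nbhd x N -> exists y, N y /\ A y.

Definition compact (K : set X) : Prop :=
  forall F : set X -> Prop, (forall A, F A -> is_open T A) ->
    (forall y, K y -> exists A, F A /\ A y) ->
    exists l : list (set X), (forall A, In A l -> F A) /\
      (forall y, K y -> exists A, In A l /\ A y).

Definition countable_family (fam : set X -> Prop) : Prop :=
  exists f : nat -> set X, forall A, fam A -> exists n, f n = A.

Definition finite_set (S : set X) : Prop :=
  exists l : list X, forall y, S y -> In y l.

Definition cn_network (x : X) (fam : set X -> Prop) : Prop :=
  forall O, nbhd x O ->
    nbhd x (fun y => exists N, fam N /\ N x /\ subset N O /\ N y).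

Definition ck_network (x : X) (fam : set X -> Prop) : Prop :=
  forall O, nbhd x O -> exists U, nbhd x U /\
    forall K, subset K U -> compact K ->
      exists F : list (set X), (forall N, In N F -> fam N) /\
        (forall N, In N F -> N x) /\
        subset K (fun y => exists N, In N F /\ N y) /\
        subset (fun y => exists N, In N F /\ N y) O.

Definition cp_network (x : X) (fam : set X -> Prop) : Prop :=
  (forall O, nbhd x O -> exists N, fam N /\ N x /\ subset N O) /\
  (forall (A : set X) O, closure A x -> ~ A x -> nbhd x O ->
     exists N, fam N /\ N x /\ subset N O /\
       ~ finite_set (fun y => N y /\ A y)).

End Topo.

(* N^N with the pointwise order. Coordinates alpha_1, alpha_2, ... of the
   paper are alpha 0, alpha 1, ... here. *)
Definition baire := nat -> nat.
Definition ble (a b : baire) : Prop := forall i, a i <= b i.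

Definition decreasing_family {X : Type} (M : baire -> Prop) (U : baire -> set X) :=
  forall a b, M a -> M b -> ble a b -> subset (U b) (U a).

Definition Ik (k : nat) (a : baire) : baire -> Prop :=
  fun b => forall i, i < k -> b i = a i.

Definition Dk {X : Type} (M : baire -> Prop) (U : baire -> set X)
  (k : nat) (a : baire) : set X :=
  fun y => forall b, Ik k a b -> M b -> U b y.

(* D_U = {D_k(alpha) : alpha in M, k in N}, N = {1,2,...} *)
Definition D_family {X : Type} (M : baire -> Prop) (U : baire -> set X) :
  set X -> Prop :=
  fun A => exists a k, M a /\ 1 <= k /\ A = Dk M U k a.

Definition condition_D {X : Type} (M : baire -> Prop) (U : baire -> set X) :=
  forall a, M a -> forall y, U a y <-> exists k, 1 <= k /\ Dk M U k a y.

Definition nbhd_base_at {X : Type} (T : topology X) (x : X)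
  (M : baire -> Prop) (U : baire -> set X) :=
  (forall a, M a -> nbhd T x (U a)) /\
  (forall O, nbhd T x O -> exists a, M a /\ subset (U a) O).

Definition good_base {X : Type} (T : topology X) (x : X)
  (M : baire -> Prop) (U : baire -> set X) :=
  decreasing_family M U /\ nbhd_base_at T x M U /\ condition_D M U.

(* Main.v *)
Require Import Defs.
From Stdlib Require Import List Lia.
From Stdlib Require Import ClassicalEpsilon Classical FunctionalExtensionality PropExtensionality.
From mathcomp Require Import choice.

Section Proofs.
Context {X : Type} (T : topology X) (x : X).

Lemma nbhd_mono (A B : set X) : nbhd T x A -> subset A B -> nbhd T x B.
Proof.
  intros [V [HV [HVx HVA]]] HAB. exists V. split; [exact HV|split; [exact HVx|]].
  intros y Hy. apply HAB, HVA, Hy.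
Qed.

Lemma nbhd_x (A : set X) : nbhd T x A -> A x.
Proof. intros [V [_ [HVx HVA]]]. apply HVA, HVx. Qed.

Lemma Dk_sub (M : baire -> Prop) (U : baire -> set X) k a :
  M a -> subset (Dk M U k a) (U a).
Proof. intros Ma y Hy. apply Hy; [intros i _; reflexivity | exact Ma]. Qed.

Lemma Dk_x (M : baire -> Prop) (U : baire -> set X) k a :
  (forall b, M b -> nbhd T x (U b)) -> Dk M U k a x.
Proof. intros H b _ Mb. apply nbhd_x, H, Mb. Qed.

Definition dec (l : list nat) : baire := fun i => nth i l 0.

Lemma dec_ok (a : baire) k i : i < k -> dec (map a (seq 0 k)) i = a i.
Proof.
  intros Hi. unfold dec.
  rewrite (nth_indep _ _ (a 0)) by (rewrite length_map, length_seq; exact Hi).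
  rewrite map_nth, seq_nth by exact Hi. reflexivity.
Qed.

Lemma D_countable (M : baire -> Prop) (U : baire -> set X) :
  countable_family (D_family M U).
Proof.
  exists (fun n => match @unpickle (nat * list nat)%type n with
                   | Some (k, l) => Dk M U k (dec l)
                   | None => fun _ => False end).
  intros A [a [k [Ma [Hk ->]]]].
  exists (pickle (k, map a (seq 0 k))). rewrite pickleK.
  apply functional_extensionality; intro y. apply propositional_extensionality.
  unfold Dk, Ik. split; intros H b Hb Mb; apply H; auto; intros i Hi.
  - rewrite Hb by exact Hi. symmetry. apply dec_ok, Hi.
  - rewrite Hb by exact Hi. apply dec_ok, Hi.
Qed.

Lemma good_cn M U : good_base T x M U -> cn_network T x (D_family M U).
Proof.
  intros [Hdec [[Hn Hb] HD]] O HO.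
  destruct (Hb O HO) as [a [Ma HaO]].
  apply (nbhd_mono (U a)); [apply Hn, Ma|].
  intros y Hy. apply (HD a Ma y) in Hy. destruct Hy as [k [Hk Hky]].
  exists (Dk M U k a). split; [exists a, k; auto|]. split; [apply Dk_x, Hn|].
  split; [|exact Hky]. intros z Hz. apply HaO, (Dk_sub M U k a Ma), Hz.
Qed.

Variable fam : set X -> Prop.
Variable f : nat -> set X.
Hypothesis Hf : forall A, fam A -> exists n, f n = A.

Definition Pgood (O : set X) i := fam (f i) /\ f i x /\ subset (f i) O.
Definition alphaO (O : set X) : baire :=
  fun i => if excluded_middle_informative (Pgood O i) then 0 else 1.
Lemma alphaO_spec O i : alphaO O i = 0 <-> Pgood O i.
Proof.
  unfold alphaO. destruct (excluded_middle_informative (Pgood O i)); split; intros; auto; try discriminate; contradiction.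
Qed.
Definition Uc (a : baire) : set X := fun y => exists i, a i = 0 /\ fam (f i) /\ f i x /\ f i y.
Definition Mc (a : baire) : Prop := nbhd T x (Uc a).

Lemma Uc_alphaO O : subset (Uc (alphaO O)) O.
Proof.
  intros y [i [Hi [_ [_ Hy]]]]. apply alphaO_spec in Hi. destruct Hi as [_ [_ Hs]]. apply Hs, Hy.
Qed.

Hypothesis Hcn : cn_network T x fam.

Lemma Mc_alphaO O : nbhd T x O -> Mc (alphaO O).
Proof.
  intros HO. apply (nbhd_mono _ _ (Hcn O HO)).
  intros y [N [HN [HNx [HNO HNy]]]]. destruct (Hf N HN) as [n <-].
  exists n. split; [apply alphaO_spec; repeat split; auto|auto].
Qed.

Lemma Dk_alphaO O i y : Pgood O i -> f i y -> Dk Mc Uc (S i) (alphaO O) y.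
Proof.
  intros HP Hy b Hb Mb. exists i. rewrite Hb by lia.
  split; [apply alphaO_spec, HP|]. destruct HP as [? [? ?]]. auto.
Qed.

Lemma good_c : good_base T x Mc Uc.
Proof.
  split; [|split; [split|]].
  - intros a b _ _ Hab y [i [Hi Hy]]. exists i. split; [|exact Hy].
    specialize (Hab i). lia.
  - intros a Ma. exact Ma.
  - intros O HO. exists (alphaO O). split; [apply Mc_alphaO, HO | apply Uc_alphaO].
  - intros a Ma y. split.
    + intros [i [Hi Hy]]. exists (S i). split; [lia|].
      intros b Hb Mb. exists i. rewrite Hb by lia. auto.
    + intros [k [_ Hk]]. apply (Dk_sub Mc Uc k a Ma), Hk.
Qed.

Lemma list_bound (F : list (set X)) :
  (forall N, In N F -> fam N) -> exists k, forall N, In N F -> exists i, i < k /\ f i = N.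
Proof.
  induction F as [|A F IH]; intros H.
  - exists 0. intros N [].
  - destruct IH as [k Hk]. { intros N HN. apply H. right. exact HN. }
    destruct (Hf A) as [n Hn]. { apply H. left. reflexivity. }
    exists (S (max n k)). intros N [<-|HN].
    + exists n. split; [lia|exact Hn].
    + destruct (Hk N HN) as [i [Hi Hi']]. exists i. split; [lia|exact Hi'].
Qed.

End Proofs.

Lemma ck_cn {X} (T : topology X) x fam : ck_network T x fam -> cn_network T x fam.
Proof.
  intros Hck O HO. destruct (Hck O HO) as [U [HU HK]].
  apply (nbhd_mono T x U); [exact HU|]. intros y Hy.
  destruct (HK (fun z => z = y)) as [F [HF1 [HF2 [HF3 HF4]]]].
  - intros z ->. exact Hy.
  - intros G _ HG. destruct (HG y eq_refl) as [A [HA HAy]].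
    exists (A :: nil). split.
    + intros B [<-|[]]. exact HA.
    + intros z ->. exists A. split; [left; reflexivity|exact HAy].
  - destruct (HF3 y eq_refl) as [N [HN HNy]]. exists N.
    split; [apply HF1, HN|]. split; [apply HF2, HN|]. split; [|exact HNy].
    intros z Hz. apply HF4. exists N. auto.
Qed.

Lemma cp_cn {X} (T : topology X) x fam : cp_network T x fam -> cn_network T x fam.
Proof.
  intros [H1 H2] O HO.
  set (S := fun y => exists N, fam N /\ N x /\ subset N O /\ N y).
  apply NNPP. intros Hn.
  set (A := fun y => ~ S y).
  assert (Hcl : closure T A x).
  { intros N HN. apply NNPP. intros Hno. apply Hn. apply (nbhd_mono T x N); [exact HN|].
    intros y Hy. apply NNPP. intros HSy. apply Hno. exists y. split; assumption. }
  assert (HAx : ~ A x).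
  { unfold A. intros HnS. apply HnS. destruct (H1 O HO) as [N [? [? ?]]].
    exists N. repeat split; auto. }
  destruct (H2 A O Hcl HAx HO) as [N [HN [HNx [HNO Hfin]]]].
  apply Hfin. exists nil. intros y [HNy HAy]. apply HAy. exists N. auto.
Qed.

Theorem mainTheorem3 (X : Type) (T : topology X) (x : X) :
  ( ((exists fam, countable_family fam /\ cn_network T x fam) <->
      (exists M U, good_base T x M U)) /\
    (forall M U, good_base T x M U ->
       countable_family (D_family M U) /\ cn_network T x (D_family M U)) ) /\
  ((exists fam, countable_family fam /\ ck_network T x fam) <->
     (exists M U, good_base T x M U /\
        countable_family (D_family M U) /\ ck_network T x (D_family M U))) /\
  ((exists fam, countable_family fam /\ cp_network T x fam) <->
     (exists M U, good_base T x M U /\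
        countable_family (D_family M U) /\ cp_network T x (D_family M U))).
Proof.
  split; [split; [split|]|split; split].
  - intros [fam [[f Hf] Hcn]]. exists (Mc T x fam f), (Uc x fam f).
    apply good_c; assumption.
  - intros [M [U HG]]. exists (D_family M U). split; [apply D_countable|apply good_cn, HG].
  - intros M U HG. split; [apply D_countable|apply good_cn, HG].
  - intros [fam [[f Hf] Hck]]. pose proof (ck_cn T x fam Hck) as Hcn.
    exists (Mc T x fam f), (Uc x fam f). split; [apply good_c; assumption|].
    split; [apply D_countable|].
    intros O HO. destruct (Hck O HO) as [V [HV HK]]. exists V. split; [exact HV|].
    intros K HKV HKc. destruct (HK K HKV HKc) as [F [HF1 [HF2 [HF3 HF4]]]].
    destruct (list_bound fam f Hf F HF1) as [k Hk].
    exists (Dk (Mc T x fam f) (Uc x fam f) (S k) (alphaO x fam f O) :: nil).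
    split; [|split; [|split]].
    + intros N [<-|[]]. exists (alphaO x fam f O), (S k).
      split; [apply Mc_alphaO; auto|split; [lia|reflexivity]].
    + intros N [<-|[]]. apply (Dk_x T). intros b Mb. exact Mb.
    + intros y Hy. destruct (HF3 y Hy) as [N [HN HNy]].
      destruct (Hk N HN) as [i [Hi <-]].
      exists (Dk (Mc T x fam f) (Uc x fam f) (S k) (alphaO x fam f O)).
      split; [left; reflexivity|].
      intros b Hb Mb. exists i. rewrite Hb by lia. split.
      * apply alphaO_spec. split; [apply HF1, HN|]. split; [apply HF2, HN|].
        intros z Hz. apply HF4. exists (f i). auto.
      * split; [apply HF1, HN|]. split; [apply HF2, HN|exact HNy].
    + intros y [N [[<-|[]] HNy]].
      apply (Uc_alphaO x fam f O), (Dk_sub _ _ (S k) _ (Mc_alphaO T x fam f Hf Hcn O HO)), HNy.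
  - intros [M [U [_ [HC Hck]]]]. exists (D_family M U). auto.
  - intros [fam [[f Hf] Hcp]]. pose proof (cp_cn T x fam Hcp) as Hcn.
    exists (Mc T x fam f), (Uc x fam f). split; [apply good_c; assumption|].
    split; [apply D_countable|].
    destruct Hcp as [H1 H2]. split.
    + intros O HO. exists (Dk (Mc T x fam f) (Uc x fam f) 1 (alphaO x fam f O)).
      split; [exists (alphaO x fam f O), 1; split; [apply Mc_alphaO; auto|split; [lia|reflexivity]]|].
      split; [apply (Dk_x T); intros b Mb; exact Mb|].
      intros y Hy. apply (Uc_alphaO x fam f O), (Dk_sub _ _ 1 _ (Mc_alphaO T x fam f Hf Hcn O HO)), Hy.
    + intros A O Hcl HAx HO. destruct (H2 A O Hcl HAx HO) as [N [HN [HNx [HNO Hfin]]]].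
      destruct (Hf N HN) as [i <-].
      exists (Dk (Mc T x fam f) (Uc x fam f) (S i) (alphaO x fam f O)).
      split; [exists (alphaO x fam f O), (S i); split; [apply Mc_alphaO; auto|split; [lia|reflexivity]]|].
      split; [apply (Dk_x T); intros b Mb; exact Mb|].
      split.
      * intros y Hy. apply (Uc_alphaO x fam f O), (Dk_sub _ _ (S i) _ (Mc_alphaO T x fam f Hf Hcn O HO)), Hy.
      * intros [l Hl]. apply Hfin. exists l. intros y [Hy HAy]. apply Hl. split; [|exact HAy].
        apply Dk_alphaO; [repeat split; auto|exact Hy].
  - intros [M [U [_ [HC Hcp]]]]. exists (D_family M U). auto.
Qed.
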